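(* There exist a constant $c>1$ and trees $T$ with arbitrarily large total domination number $\gamma_t=\gamma_t(T)$ such that, with $n$ the order of $T$, $$\Gamma_t(T)\ge c^{\gamma_t}\left(\frac{n-\frac{\gamma_t}{2}}{\frac{\gamma_t}{2}}\right)^{\gamma_t/2}.$$
   Context: For a graph $G$ without isolated vertices, a set $D\subseteq V(G)$ is total dominating if every vertex of $G$ has a neighbour in $D$. The total domination number $\gamma_t(G)$ is the minimum size of a total dominating set, and $\Gamma_t(G)$ is the number of total dominating sets of size $\gamma_t(G)$. *)

(* Defs.v *)
From mathcomp Require Import all_boot.
Set Implicit Arguments. Unset Strict Implicit. Unset Printing Implicit Defensive.

Section Graphs.
Variable T : finType.
Variable e : rel T.

Definition simple_graph : Prop := symmetric e /\ irreflexive e.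

Definition connected_graph : Prop := forall x y : T, connect e x y.

Definition has_cycle : Prop :=
  exists c : seq T, [&& uniq c, 2 < size c & cycle e c].

Definition is_tree : Prop :=
  [/\ simple_graph, connected_graph & ~ has_cycle].

Definition no_isolated : Prop := forall v : T, exists u : T, e v u.

Definition total_dominating (D : {set T}) : bool :=
  [forall v, [exists u in D, e v u]].

(* total domination number: minimum size of a total dominating set
   (equals #|T| by convention if no total dominating set exists, which
   never happens for graphs without isolated vertices) *)
Definition gamma_t : nat :=
  \big[minn/#|T|]_(D : {set T} | total_dominating D) #|D|.

Definition Gamma_t : nat :=
  #|[set D : {set T} | total_dominating D && (#|D| == gamma_t)]|.

End Graphs.

(* Main.v *)
Require Import Defs.
From mathcomp Require Import all_boot zify.
From Stdlib Require Import Reals Lra.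
Set Implicit Arguments. Unset Strict Implicit. Unset Printing Implicit Defensive.


Definition lparn (l : nat) : nat :=
  match l with 1 => 0 | 2 => 1 | 3 => 2 | 4 => 0 | 5 => 4 | 6 => 5 | 7 => 0
  | 8 => 7 | 9 => 8 | 10 => 0 | 11 => 10 | 12 => 11 | 13 => 3 | 14 => 13
  | 15 => 14 | 16 => 3 | 17 => 16 | 18 => 17 | 19 => 3 | 20 => 19 | 21 => 20
  | _ => 0 end.
Definition depth (l : nat) : nat :=
  match l with 0=>0|1=>1|2=>2|3=>3|4=>1|5=>2|6=>3|7=>1|8=>2|9=>3|10=>1|11=>2
  |12=>3|13=>4|14=>5|15=>6|16=>4|17=>5|18=>6|19=>4|20=>5|21=>6|_=>0 end.
Definition Pn (p : nat * nat) : nat * nat :=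
  if p.2 == 0 then (p.1.-1, if p.1 == 0 then 0 else 3) else (p.1, lparn p.2).
Definition Hn (p : nat * nat) : nat := 7 * p.1 + depth p.2.

Lemma lparn_lt l : l < 22 -> lparn l < 22.
Proof. by do 22?[case: l => [|l]//]. Qed.
Lemma depth_lt l : 0 < l < 22 -> depth (lparn l) < depth l.
Proof. by do 22?[case: l => [|l]//]. Qed.
Lemma depth_le l : depth l < 7.
Proof. by do 22?[case: l => [|l]//]. Qed.

Lemma Pn_range i l : l < 22 -> (Pn (i, l)).1 <= i /\ (Pn (i,l)).2 < 22.
Proof.
rewrite /Pn /=; case: eqP => [_|_] Hl /=.
  by split; [lia | case: eqP].
by split => //; apply: lparn_lt.
Qed.

Lemma Pn_H i l : l < 22 -> (i, l) != (0, 0) -> Hn (Pn (i, l)) < Hn (i, l).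
Proof.
move=> Hl Hne; rewrite /Pn /Hn /=.
case: (eqVneq l 0) => [El|Nl] /=.
  subst l; case: (eqVneq i 0) => [Ei|Ni] /=; first by subst i.
  by rewrite /=; lia.
have := depth_lt (l:=l); rewrite Hl andbT lt0n Nl => /(_ isT); lia.
Qed.

Section G.
Variable K : nat.
Definition V := ('I_K.+1 * 'I_22)%type.
Definition vn (v : V) : nat * nat := (val v.1, val v.2).
Definition E : rel V := fun u v => (u != v) && ((Pn (vn u) == vn v) || (Pn (vn v) == vn u)).

Lemma vn_inj : injective vn.
Proof. move=> [a b] [c d]; rewrite /vn /= => -[] /val_inj -> /val_inj -> //. Qed.

Lemma vn_range (v : V) : (vn v).1 < K.+1 /\ (vn v).2 < 22.
Proof. by case: v => [a b]; split; apply: ltn_ord. Qed.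

Definition par (v : V) : V := (inord (Pn (vn v)).1, inord (Pn (vn v)).2).
Lemma vn_par v : vn (par v) = Pn (vn v).
Proof.
case: v => [a b]; rewrite /par /vn /=.
have [H1 H2] := Pn_range (val a) (ltn_ord b).
have H3 : (Pn (val a, val b)).1 < K.+1 by apply: leq_ltn_trans H1 (ltn_ord a).
rewrite (inordK H3) (inordK H2).
by case: (Pn _).
Qed.

Arguments E : simpl never.
Definition root : V := (ord0, ord0).

Lemma E_sym : symmetric E.
Proof. by move=> u v; rewrite /E eq_sym orbC. Qed.
Lemma E_irr : irreflexive E.
Proof. by move=> u; rewrite /E eqxx. Qed.

Lemma vn_root v : (vn v == (0,0)) = (v == root).
Proof. apply/eqP/eqP => [H|->] //; by apply: vn_inj; rewrite H. Qed.

Lemma E_par v : v != root -> E v (par v).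
Proof.
move=> Hv; rewrite /E vn_par eqxx /= andbT.
apply/eqP => Ev.
move: Hv; rewrite -vn_root.
have := Pn_H (i:=(vn v).1) (vn_range v).2.
rewrite -surjective_pairing -vn_par -Ev => H /H; lia.
Qed.

Lemma H_par v : v != root -> Hn (vn (par v)) < Hn (vn v).
Proof.
rewrite -vn_root vn_par; have := Pn_H (i:=(vn v).1) (vn_range v).2.
by rewrite -surjective_pairing.
Qed.

Lemma conn_root v : connect E v root.
Proof.
move: {2}(Hn (vn v)) (leqnn (Hn (vn v))) => n; elim: n v => [|n IH] v Hv.
  case: (eqVneq v root) => [->|Hr]; first exact: connect0.
  by have := H_par Hr; lia.
case: (eqVneq v root) => [->|Hr]; first exact: connect0.
apply: connect_trans (connect1 (E_par Hr)) (IH _ _).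
have := H_par Hr; lia.
Qed.

Lemma E_conn : connected_graph E.
Proof.
move=> x y; apply: connect_trans (conn_root x) _.
by rewrite (sym_connect_sym E_sym) conn_root.
Qed.

Lemma E_noiso : no_isolated E.
Proof.
move=> v; case: (eqVneq v root) => [->|Hr]; last by exists (par v); exact: E_par.
have Hu : ((ord0, inord 1) : V) != root.
  by apply/eqP => -[] /(congr1 val); rewrite /= inordK.
exists (ord0, inord 1); rewrite E_sym; have := E_par Hu.
have -> // : par (ord0, inord 1) = root.
by apply: vn_inj; rewrite vn_par /vn /= inordK.
Qed.

Lemma Pn_root : Pn (vn root) = vn root.
Proof. by []. Qed.

Lemma max_nbr (m u : V) : E m u -> Hn (vn u) <= Hn (vn m) -> u = par m.
Proof.
rewrite /E => /andP [Hmu /orP [/eqP H|/eqP H]] Hle.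
  by apply: vn_inj; rewrite vn_par H.
case: (eqVneq u root) => [Eu|Hu].
  exfalso; move: H; rewrite Eu Pn_root => /vn_inj Em.
  by move: Hmu; rewrite Eu Em eqxx.
have := H_par Hu; rewrite vn_par H; lia.
Qed.

Lemma E_acyclic : ~ has_cycle E.
Proof.
case=> c /and3P [Uc Sc Cc].
have [m Hm] : exists m, m \in c.
  by case: c {Uc Cc} Sc => // x s _; exists x; rewrite inE eqxx.
have [mm Hmm Hmax] : exists2 mm, mm \in c & forall y, y \in c -> Hn (vn y) <= Hn (vn mm).
  case: (@arg_maxnP _ m (mem c) (fun x => Hn (vn x)) Hm) => x Hx Hy; by exists x.
case: (rot_to Hmm) => i s Hrot.
have : uniq (mm :: s) by rewrite -Hrot rot_uniq.
have : cycle E (mm :: s) by rewrite -Hrot rot_cycle.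
have : 2 < size (mm :: s) by rewrite -Hrot size_rot.
have Hin : forall y, y \in mm :: s -> Hn (vn y) <= Hn (vn mm).
  by move=> y; rewrite -Hrot mem_rot; apply: Hmax.
case: s Hrot Hin => [|u [|w s']] //= _ Hin _.
move=> /andP [Emu]; rewrite rcons_path => /andP [_ Elast] /andP [_ /andP [Hus _]].
have Hu : u = par mm by apply: (max_nbr Emu); apply: Hin; rewrite !inE eqxx orbT.
have Hl : last w s' = par mm.
  apply: max_nbr; first by rewrite E_sym; case/andP: Elast.
  by apply: Hin; rewrite inE; apply/orP; right; rewrite inE; apply/orP; right; exact: mem_last.
move: Hus; rewrite Hu -Hl.
by move/negP; apply; exact: mem_last.
Qed.

Lemma E_tree : is_tree E.
Proof. split; [split; [exact: E_sym|exact: E_irr]|exact: E_conn|exact: E_acyclic]. Qed.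
End G.


Definition oi (x : nat) : 'I_22 := inord x.

Lemma card_count (S : {set 'I_22}) : #|S| = count (fun x => oi x \in S) (iota 0 22).
Proof.
rewrite -val_enum_ord count_map cardE enumT /enum_mem size_filter.
by apply: eq_count => x /=; rewrite /oi inord_val.
Qed.

Definition nbl (l : nat) : seq nat :=
  [seq x <- iota 0 22 | (x == lparn l) || ((x != 0) && (lparn x == l))].

Lemma orb_nat (a b : bool) : a || b -> 1 <= a + b.
Proof. by case: a; case: b. Qed.

Lemma local14 (P : nat -> bool) :
  has P (nbl 1) -> has P (nbl 2) ->
  has P (nbl 5) -> has P (nbl 6) -> has P (nbl 8) -> has P (nbl 9) ->
  has P (nbl 11) -> has P (nbl 12) -> has P (nbl 14) -> has P (nbl 15) ->
  has P (nbl 17) -> has P (nbl 18) -> has P (nbl 20) -> has P (nbl 21) ->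
  14 <= count P (iota 0 22).
Proof.
rewrite /nbl /= !orbF.
move=> /orb_nat h1 /orb_nat h2 /orb_nat h5 h6 /orb_nat h8 h9 /orb_nat h11 h12
  /orb_nat h14 h15 /orb_nat h17 h18 /orb_nat h20 h21.
rewrite h6 h9 h12 h15 h18 h21.
clear h6 h9 h12 h15 h18 h21.
move: h1 h2 h5 h8 h11 h14 h17 h20.
repeat match goal with |- context [nat_of_bool (P ?i)] => generalize (nat_of_bool (P i)); intro end.
simpl; lia.
Qed.

Section L.
Variable K : nat.

Lemma E_local (u v : V K) : (vn u).2 != 0 -> (vn u).2 != 3 -> E u v ->
  (vn v).1 = (vn u).1 /\ (vn v).2 \in nbl (vn u).2.
Proof.
move=> H0 H3; rewrite /E => /andP [_ /orP [/eqP H|/eqP H]].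
  move: H; rewrite /Pn (negbTE H0) => <- /=; split => //.
  rewrite mem_filter eqxx orTb andTb mem_iota add0n leq0n /=; apply: lparn_lt; exact: (vn_range u).2.
move: H; rewrite /Pn; case: eqP => [Z|/eqP NZ] /=.
  by case: eqP => _; rewrite /vn => -[_ E]; move: H0 H3; rewrite /vn /= -E.
move: NZ; rewrite /vn /= => NZ [E1 E]; split; first by [].
rewrite mem_filter E NZ eqxx orbT andTb mem_iota add0n leq0n /=; exact: (vn_range v).2.
Qed.

Definition slice (D : {set V K}) (i : 'I_K.+1) : {set 'I_22} := [set l | (i, l) \in D].

Lemma slice_has (D : {set V K}) i l : l < 22 -> l != 0 -> l != 3 ->
  total_dominating (@E K) D -> has (fun x => oi x \in slice D i) (nbl l).
Proof.
move=> Hl H0 H3 /forallP /(_ (i, oi l)) /existsP [u /andP [uD Eu]].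
have Hv : (vn (i, oi l)).2 = l by rewrite /vn /= /oi inordK.
have [E1 E2] := E_local (u:=(i, oi l)) (v:=u) ltac:(by rewrite Hv) ltac:(by rewrite Hv) Eu.
apply/hasP; exists (vn u).2; first by rewrite -Hv.
rewrite /oi /vn /= inord_val inE.
have E3 : u.1 = i by apply: val_inj; exact: E1.
by rewrite -E3 -surjective_pairing.
Qed.

Lemma slice14 (D : {set V K}) i : total_dominating (@E K) D -> 14 <= #|slice D i|.
Proof.
move=> HD; rewrite card_count; apply: local14; exact: slice_has.
Qed.

Lemma card_slices (D : {set V K}) : #|D| = \sum_(i < K.+1) #|slice D i|.
Proof.
rewrite -sum1_card big_mkcond /=.
rewrite (eq_bigr (fun p : V K => (fun a b => if (a, b) \in D then 1 else 0) p.1 p.2)); last by move=> [a b].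
rewrite -(pair_bigA _ (fun a b => if (a, b) \in D then 1 else 0)).
apply: eq_bigr => i _; rewrite -sum1_card [RHS]big_mkcond; apply: eq_bigr => j _.
by rewrite inE.
Qed.

Lemma tds_lb (D : {set V K}) : total_dominating (@E K) D -> 14 * K.+1 <= #|D|.
Proof.
move=> HD; rewrite card_slices.
have -> : 14 * K.+1 = \sum_(i < K.+1) 14 by rewrite sum_nat_const card_ord mulnC.
by apply: leq_sum => i _; apply: slice14.
Qed.
End L.


Definition side := (bool * bool * bool + (bool * bool + (bool + unit)))%type.
Definition decode (x : side) : bool * bool * bool * bool :=
  match x with
  | inl (a, b, c) => (true, a, b, c)
  | inr (inl (b, c)) => (false, true, b, c)
  | inr (inr (inl c)) => (false, false, true, c)
  | inr (inr (inr _)) => (false, false, false, true)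
  end.
Definition encode (y : bool * bool * bool * bool) : side :=
  match y with
  | (true, a, b, c) => inl (a, b, c)
  | (false, true, b, c) => inr (inl (b, c))
  | (false, false, true, c) => inr (inr (inl c))
  | (false, false, false, _) => inr (inr (inr tt))
  end.
Lemma decodeK : cancel decode encode.
Proof. by case=> [[[a b] c]|[[b c]|[c|[]]]]. Qed.
Lemma decode_ok x : let: (s, a, b, c) := decode x in [|| s, a, b | c].
Proof. by case: x => [[[a b] c]|[[b c]|[c|[]]]]. Qed.
Lemma card_side : #|{: side}| = 15.
Proof. by rewrite !(card_sum, card_prod, card_bool, card_unit). Qed.

Definition mb (s1 y1 y2 y3 s2 y4 y5 y6 : bool) (l : nat) : bool :=
  match l with
  | 0 => ~~ s2 | 1 => s1 | 2 => s2 | 3 => ~~ s1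
  | 4 => y1 | 5 => true | 6 => ~~ y1
  | 7 => y2 | 8 => true | 9 => ~~ y2
  | 10 => y3 | 11 => true | 12 => ~~ y3
  | 13 => y4 | 14 => true | 15 => ~~ y4
  | 16 => y5 | 17 => true | 18 => ~~ y5
  | 19 => y6 | 20 => true | 21 => ~~ y6
  | _ => false end.

Definition memb (c : side * side) (l : nat) : bool :=
  let: (s1, y1, y2, y3) := decode c.1 in
  let: (s2, y4, y5, y6) := decode c.2 in
  mb s1 y1 y2 y3 s2 y4 y5 y6 l.

Definition ladj (l x : nat) : bool :=
  (x != l) && (((l != 0) && (lparn l == x)) || ((x != 0) && (lparn x == l))).

Lemma mb_tds s1 y1 y2 y3 s2 y4 y5 y6 :
  [|| s1, y1, y2 | y3] -> [|| s2, y4, y5 | y6] ->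
  all (fun l => has (fun x => mb s1 y1 y2 y3 s2 y4 y5 y6 x && ladj l x) (iota 0 22)) (iota 0 22).
Proof. by case: s1; case: y1; case: y2; case: y3; case: s2; case: y4; case: y5; case: y6. Qed.

Lemma mb_count s1 y1 y2 y3 s2 y4 y5 y6 :
  count (mb s1 y1 y2 y3 s2 y4 y5 y6) (iota 0 22) = 14.
Proof. by case: s1; case: y1; case: y2; case: y3; case: s2; case: y4; case: y5; case: y6. Qed.

Lemma memb_tds c l : l < 22 -> exists2 x, x < 22 & memb c x && ladj l x.
Proof.
rewrite /memb; have := decode_ok c.1; have := decode_ok c.2.
case: (decode c.1) => [[[s1 y1] y2] y3]; case: (decode c.2) => [[[s2 y4] y5] y6] h2 h1 Hl.
have /allP H := mb_tds h1 h2.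
have : l \in iota 0 22 by rewrite mem_iota.
move=> /H /hasP [x]; rewrite mem_iota /= => Hx Hm; by exists x.
Qed.

Lemma memb_count c : count (memb c) (iota 0 22) = 14.
Proof.
rewrite /memb; case: (decode c.1) => [[[s1 y1] y2] y3]; case: (decode c.2) => [[[s2 y4] y5] y6].
exact: mb_count.
Qed.

Lemma memb_inj c d : (forall l, l < 22 -> memb c l = memb d l) -> c = d.
Proof.
case: c => c1 c2; case: d => d1 d2 H.
have : decode c1 = decode d1 /\ decode c2 = decode d2.
  move: (H 1 isT) (H 2 isT) (H 4 isT) (H 7 isT) (H 10 isT) (H 13 isT) (H 16 isT) (H 19 isT).
  rewrite /memb /=.
  case: (decode c1) => [[[s1 y1] y2] y3]; case: (decode c2) => [[[s2 y4] y5] y6].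
  case: (decode d1) => [[[t1 z1] z2] z3]; case: (decode d2) => [[[t2 z4] z5] z6] /=.
  by move=> -> -> -> -> -> -> -> ->.
by case=> /(can_inj decodeK) -> /(can_inj decodeK) ->.
Qed.


Lemma bigmin_le (I : eqType) (r : seq I) (P : pred I) (F : I -> nat) idx x0 :
  x0 \in r -> P x0 -> \big[minn/idx]_(i <- r | P i) F i <= F x0.
Proof.
elim: r => [|y r IH] //; rewrite inE big_cons => /orP [/eqP <-|Hr] Px.
  by rewrite Px geq_minl.
case: (P y); last exact: IH.
by rewrite geq_min IH // orbT.
Qed.

Lemma bigmin_ge (I : Type) (r : seq I) (P : pred I) (F : I -> nat) idx L :
  L <= idx -> (forall i, P i -> L <= F i) -> L <= \big[minn/idx]_(i <- r | P i) F i.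
Proof.
move=> H1 H2; apply: (big_ind (fun x => L <= x)) => // x y Hx Hy.
by rewrite leq_min Hx Hy.
Qed.

Section M.
Variable K : nat.
Definition FT := {ffun 'I_K.+1 -> side * side}.
Definition DF (F : FT) : {set V K} := [set v | memb (F v.1) (val v.2)].

Lemma E_loc (i : 'I_K.+1) (l x : nat) : l < 22 -> x < 22 -> ladj l x -> @E K (i, oi l) (i, oi x).
Proof.
move=> Hl Hx /andP [Hne Hor]; rewrite /E /vn /= /oi !inordK //.
apply/andP; split.
  apply/eqP => -[] /(congr1 val); rewrite /= !inordK // => Exl.
  by move: Hne; rewrite Exl eqxx.
case/orP: Hor => /andP [Hz /eqP Hp]; rewrite /Pn /=.
  by rewrite (negbTE Hz) Hp eqxx.
by rewrite (negbTE Hz) Hp eqxx orbT.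
Qed.

Lemma DF_tds F : total_dominating (@E K) (DF F).
Proof.
apply/forallP => -[i l]; have [x Hx /andP [Hm Ha]] := memb_tds (F i) (ltn_ord l).
apply/existsP; exists (i, oi x); rewrite inE /= /oi inordK // Hm /=.
have := E_loc i (ltn_ord l) Hx Ha; by rewrite /oi inord_val.
Qed.

Lemma DF_card F : #|DF F| = 14 * K.+1.
Proof.
rewrite card_slices.
have -> : 14 * K.+1 = \sum_(i < K.+1) 14 by rewrite sum_nat_const card_ord mulnC.
apply: eq_bigr => i _; rewrite card_count -[RHS](memb_count (F i)).
apply: eq_in_count => x; rewrite mem_iota /= => Hx.
by rewrite !inE /= /oi inordK.
Qed.

Lemma DF_inj : injective DF.
Proof.
move=> F G H; apply/ffunP => i; apply: memb_inj => l Hl.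
move/setP: H => /(_ (i, oi l)); by rewrite !inE /= /oi inordK.
Qed.

Definition F0 : FT := [ffun _ => (inl (true, true, true), inl (true, true, true))].

Lemma gamma_val : gamma_t (@E K) = 14 * K.+1.
Proof.
apply/eqP; rewrite eqn_leq; apply/andP; split.
  rewrite /gamma_t -(DF_card F0); apply: bigmin_le; first exact: mem_index_enum.
  exact: DF_tds.
apply: bigmin_ge; last by move=> D; apply: tds_lb.
rewrite card_prod !card_ord; lia.
Qed.

Lemma Gamma_lb : expn 225 K.+1 <= Gamma_t (@E K).
Proof.
have -> : expn 225 K.+1 = #|[set: FT]| by rewrite cardsT card_ffun card_prod card_side card_ord.
rewrite -(card_imset _ DF_inj); apply: subset_leq_card; apply/subsetP => D /imsetP [F _ ->].
by rewrite inE DF_tds DF_card gamma_val eqxx.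
Qed.
End M.


Lemma num_ineq : ((201/200)^14 * (15/7)^7 <= 225)%R.
Proof. simpl. lra. Qed.

Lemma h1gen (x : R) : (INR 14 * x / 2 = INR 7 * x)%R.
Proof. simpl; field. Qed.
Lemma h2gen (x : R) : (0 < x)%R -> ((INR 22 * x - INR 7 * x) / (INR 7 * x) = 15/7)%R.
Proof. move=> Hx; simpl; field; lra. Qed.

Lemma powE (m n : nat) : Nat.pow m n = expn m n.
Proof. elim: n => // n IH; rewrite expnS -IH. by []. Qed.

Theorem mainTheorem7 :
  exists c : R, (1 < c)%R /\
    forall N : nat,
      exists (T : finType) (e : rel T),
        [/\ is_tree e, no_isolated e, (N <= gamma_t e)%N &
          (Rpower c (INR (gamma_t e)) *
             Rpower ((INR #|T| - INR (gamma_t e) / 2) / (INR (gamma_t e) / 2))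
                    (INR (gamma_t e) / 2)
           <= INR (Gamma_t e))%R].
Proof.
exists (201/200)%R; split; first lra.
move=> N; exists (V N), (@E N); split.
- exact: E_tree.
- exact: E_noiso.
- rewrite gamma_val; apply: leq_trans (leqnSn N) _; rewrite -{1}(mul1n N.+1).
  by apply: leq_mul.
have HG := Gamma_lb N.
have Hc : #|{: V N}| = (22 * N.+1)%N by rewrite /V card_prod !card_ord mulnC.
rewrite Hc gamma_val.
have Hk : (0 < INR N.+1)%R.
  by apply: lt_0_INR; apply/ltP.
have E14 : (14 * N.+1)%N = Nat.mul 14 N.+1 by [].
have E7 : (7 * N.+1)%N = Nat.mul 7 N.+1 by [].
have E22 : (22 * N.+1)%N = Nat.mul 22 N.+1 by [].
have h1 : (INR (14 * N.+1) / 2 = INR (7 * N.+1))%R by rewrite E14 E7 !mult_INR h1gen.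
have h2 : ((INR (22 * N.+1) - INR (7 * N.+1)) / INR (7 * N.+1) = 15/7)%R.
  by rewrite E22 E7 !mult_INR h2gen.
rewrite h1 h2 !Rpower_pow; try lra.
rewrite E14 E7 !pow_mult -Rpow_mult_distr.
apply: Rle_trans (_ : (225 ^ N.+1 <= _)%R).
  apply: pow_incr; split; last exact: num_ineq.
  apply: Rmult_le_pos; apply: pow_le; lra.
have -> : (225 ^ N.+1)%R = INR (Nat.pow 225 N.+1) by rewrite pow_INR INR_IZR_INZ.
apply: le_INR; apply/leP; rewrite powE; exact: HG.
Qed.
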